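(* Let $\sigma$ be a convex polytope in a Euclidean vector space $\mathbb{E}$ and let $D\subseteq\mathbb{E}$ be a finite set which is sufficiently rich for $\sigma$. For a vertex $v$ of $\sigma$ let $E_v=\{w-v \mid w \text{ a vertex of }\sigma,\ w\neq v\}$. Then for every point $x\in Z(D)$ there is a vertex $v$ of $\sigma$ such that $x+Z(E_v)\subseteq Z(D)$. In particular $Z(D)$ contains a parallel translate of $\sigma$ that contains $x$.
   Context: For a finite set $D\subseteq\mathbb{E}$, the zonotope $Z(D)=\sum_{z\in D}[0,z]$ is the Minkowski sum of the segments $[0,z]$. $D$ is sufficiently rich for a polytope $\sigma$ if $w-v\in D$ for any two distinct vertices $v,w$ of $\sigma$. *)

(* Defs.v *)
(* The Euclidean space E is modelled as 'rV[R]_n over an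
   arbitrary real field R (the statement is affine/convex, so no inner
   product is needed). *)
From HB Require Import structures.
From mathcomp Require Import all_boot all_order all_algebra.
Set Implicit Arguments. Unset Strict Implicit. Unset Printing Implicit Defensive.
Import Order.TTheory GRing.Theory Num.Theory.
Local Open Scope ring_scope.

Section Defs.
Variables (R : realFieldType) (n : nat).
Local Notation E := 'rV[R]_n.

Definition conv (S : seq E) (x : E) : Prop :=
  exists l : 'I_(size S) -> R,
    (forall i, 0 <= l i) /\ \sum_i l i = 1 /\ x = \sum_i l i *: S`_i.

Definition is_polytope (sigma : E -> Prop) : Prop :=
  exists S : seq E, S != [::] /\ forall x, sigma x <-> conv S x.

Definition is_vertex (sigma : E -> Prop) (v : E) : Prop :=
  sigma v /\
  forall a b : E, sigma a -> sigma b ->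
    forall t : R, 0 < t < 1 -> v = (1 - t) *: a + t *: b -> a = b.

(* Zonotope Z(P) of a finite set P (given as a predicate): the Minkowski
   sum of the segments [0,z], z in P.  The sum ranges over a duplicate-free
   enumeration s of P.  (Empty if P is infinite; only used on finite P.) *)
Definition zonotope (P : E -> Prop) (x : E) : Prop :=
  exists s : seq E, uniq s /\ (forall z, z \in s <-> P z) /\
    exists t : E -> R, (forall z, 0 <= t z <= 1) /\
      x = \sum_(z <- s) t z *: z.

Definition suff_rich (D : seq E) (sigma : E -> Prop) : Prop :=
  forall v w, is_vertex sigma v -> is_vertex sigma w -> v != w -> w - v \in D.

Definition edge_dirs (sigma : E -> Prop) (v : E) (z : E) : Prop :=
  exists w, is_vertex sigma w /\ w <> v /\ z = w - v.

End Defs.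

(* Main.v *)
Require Import Defs.
From HB Require Import structures.
From mathcomp Require Import all_boot all_order all_algebra.
From Stdlib Require Import Classical ClassicalDescription.
Import Order.TTheory GRing.Theory Num.Theory.
Set Implicit Arguments. Unset Strict Implicit. Unset Printing Implicit Defensive.
Local Open Scope ring_scope.

Section Helpers.
Variable R : realFieldType.

Lemma sum_if_eq (T : eqType) (W : nmodType) (r : seq T) a (F : T -> W) :
  uniq r -> a \in r -> \sum_(z <- r) (if z == a then F z else 0) = F a.
Proof.
move=> ur ar; rewrite (big_rem a) //= eqxx big1_seq ?addr0 // => z /andP[_].
by rewrite mem_rem_uniq // => /andP[/negbTE -> _].
Qed.

Lemma sum_sub (T : eqType) (W : nmodType) (r1 r2 : seq T) (F : T -> W) :
  uniq r1 -> uniq r2 -> {subset r1 <= r2} ->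
  \sum_(z <- r2 | z \in r1) F z = \sum_(z <- r1) F z.
Proof.
move=> u1 u2 s12; rewrite -big_filter; apply: perm_big; apply: uniq_perm.
- exact: filter_uniq.
- exact: u1.
move=> z; rewrite mem_filter; case: (boolP (z \in r1)) => //= /s12 -> //.
Qed.

Lemma le_sum_mem (T : eqType) (r : seq T) (F : T -> R) z :
  (forall w, 0 <= F w) -> z \in r -> F z <= \sum_(w <- r) F w.
Proof. by move=> F0 zr; rewrite (big_rem z) //= lerDl sumr_ge0. Qed.

Lemma count_le (T : eqType) (a b : pred T) (s : seq T) :
  (forall z, z \in s -> a z -> b z) -> (count a s <= count b s)%N.
Proof.
elim: s => [|y s IH] //= hab.
apply: leq_add; last by apply: IH => z zs; apply: hab; rewrite in_cons zs orbT.
case ay: (a y) => //; by rewrite (hab y) // in_cons eqxx.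
Qed.

Lemma count_lt (T : eqType) (a b : pred T) (s : seq T) :
  (forall z, z \in s -> a z -> b z) -> (exists2 z, z \in s & b z && ~~ a z) ->
  (count a s < count b s)%N.
Proof.
elim: s => [|y s IH] /= hab [z]; first by rewrite in_nil.
have hs : forall z, z \in s -> a z -> b z.
  by move=> w ws; apply: hab; rewrite in_cons ws orbT.
rewrite in_cons => /orP[/eqP -> | zs] hz.
  case/andP: hz => -> /negbTE ->; rewrite add0n add1n ltnS.
  exact: count_le.
rewrite -addnS; apply: leq_add; last by apply: IH => //; exists z.
case ay: (a y) => //; by rewrite (hab y) // in_cons eqxx.
Qed.
End Helpers.
Section Core.
Variables (R : realFieldType) (V : lmodType R).
Variables (k : nat) (vt : 'I_k -> V) (sD : seq V).
Hypotheses (uD : uniq sD) (hD : forall i j, i != j -> vt j - vt i \in sD).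

Lemma core_step (i0 : 'I_k) (t : V -> R) :
  (forall z, 0 <= t z <= 1) ->
  ~~ [exists i, [forall j, (j != i) ==> (t (vt j - vt i) == 0)]] ->
  exists t' : V -> R, [/\ (forall z, 0 <= t' z <= 1),
    \sum_(d <- sD) t' d *: d = \sum_(d <- sD) t d *: d &
    (count (fun d => t' d != 0%R) sD < count (fun d => t d != 0%R) sD)%N].
Proof.
move=> t01; rewrite negb_exists => /forallP H.
have t0 z : 0 <= t z by case/andP: (t01 z).
have {}H i : exists j, (j != i) && (t (vt j - vt i) != 0).
  by move: (H i); rewrite negb_forall => /existsP[j]; rewrite negb_imply => hj; exists j.
pose sf i := odflt i [pick j | (j != i) && (t (vt j - vt i) != 0)].
have hf i : (sf i != i) && (t (vt (sf i) - vt i) != 0).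
  rewrite /sf; case: pickP => [j hj //| none].
  by case: (H i) => j hj; rewrite none in hj.
have [u [p [p0 pu]]] : exists u p, (0 < p)%N /\ iter p sf u = u.
  apply: NNPP => hno.
  have: ~ injective (fun j : 'I_k.+1 => iter j sf i0).
    by move/leq_card; rewrite !card_ord ltnn.
  apply => j1 j2 hg.
  have key (a b : 'I_k.+1) : (a < b)%N -> iter a sf i0 = iter b sf i0 -> False.
    move=> ab e; apply: hno; exists (iter a sf i0), (b - a)%N; split.
      by rewrite subn_gt0.
    by rewrite -iterD subnK ?(ltnW ab) // e.
  case: (ltngtP j1 j2) => [lt|gt|eq]; first by exfalso; exact: key lt hg.
    by exfalso; exact: key gt (esym hg).
  exact: val_inj.
pose e (j : nat) := vt (iter j.+1 sf u) - vt (iter j sf u).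
have he j : e j \in sD.
  by apply: hD; rewrite eq_sym; case/andP: (hf (iter j sf u)).
have tpos j : 0 < t (e j).
  by rewrite lt_def t0 andbT; case/andP: (hf (iter j sf u)).
have sume : \sum_(0 <= j < p) e j = 0.
  by rewrite /e (telescope_sumr (fun j : nat => vt (iter j sf u))) // pu subrr.
pose m (d : V) := \sum_(j < p) ((e j == d)%:R : R).
have m0 d : 0 <= m d by apply: sumr_ge0 => j _; rewrite ler0n.
have mpos (j : 'I_p) : 0 < m (e j).
  rewrite /m (bigD1 j) //= eqxx.
  by apply: (lt_le_trans (ltr01)); rewrite lerDl sumr_ge0 // => l _; rewrite ler0n.
have mnz d : m d != 0 -> exists j : 'I_p, e j = d.
  move=> hm; apply: NNPP => hno; move/eqP: hm; apply.
  by apply: big1 => j _; case: eqP => // ed; exfalso; apply: hno; exists j.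
have summ : \sum_(d <- sD) m d *: d = 0.
  transitivity (\sum_(j < p) e j); last by rewrite -(big_mkord xpredT e).
  rewrite (eq_bigr (fun d => \sum_(j < p) (e j == d)%:R *: d)); last first.
    by move=> d _; rewrite scaler_suml.
  rewrite exchange_big; apply: eq_bigr => j _.
  transitivity (\sum_(d <- sD) (if d == e j then d else 0)).
    apply: eq_bigr => d _.
    by rewrite eq_sym; case: (d == e j); rewrite ?scale1r ?scale0r.
  exact: (@sum_if_eq _ _ _ _ (fun d => d) uD (he j)).
have [p' ep] : exists p', p = p'.+1 by exists p.-1; rewrite prednK.
subst p.
pose r (j : 'I_p'.+1) := t (e j) / m (e j).
case: (@arg_minP _ _ _ ord0 xpredT r) => // jm _ hmin.
pose eps := r jm.
have eps0 : 0 <= eps by rewrite /eps /r divr_ge0 // ltW.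
exists (fun d => t d - eps * m d); split.
- move=> z; apply/andP; split; last first.
    by rewrite (le_trans _ (proj2 (andP (t01 z)))) // lerBlDr lerDl mulr_ge0.
  rewrite subr_ge0; case: (boolP (m z == 0)) => [/eqP -> | /mnz [j <-]].
    by rewrite mulr0.
  by rewrite -ler_pdivlMr // hmin.
- rewrite (eq_bigr (fun d => t d *: d - eps *: (m d *: d))); last first.
    by move=> d _; rewrite scalerBl scalerA.
  by rewrite sumrB -scaler_sumr summ scaler0 subr0.
- apply: count_lt.
    move=> z _; apply: contraNN => /eqP tz; have: m z == 0.
      apply: contraT => /mnz [j ez]; by move: (tpos j); rewrite ez tz ltxx.
    by move/eqP ->; rewrite tz mulr0 subr0.
  exists (e jm) => //; rewrite (gt_eqF (tpos jm)) /= negbK /eps /r.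
  by rewrite divfK ?subrr // gt_eqF.
Qed.

Lemma core (i0 : 'I_k) N (t : V -> R) :
  (count (fun d => t d != 0%R) sD <= N)%N -> (forall z, 0 <= t z <= 1) ->
  exists t0 : V -> R, [/\ (forall z, 0 <= t0 z <= 1),
    \sum_(d <- sD) t0 d *: d = \sum_(d <- sD) t d *: d &
    exists i, forall j, j != i -> t0 (vt j - vt i) = 0].
Proof.
elim: N t => [|N IH] t hc t01;
  case: (boolP [exists i, [forall j, (j != i) ==> (t (vt j - vt i) == 0)]])
    => [/existsP[i /forallP hi] | hne].
- by exists t; split => //; exists i => j ji; move: (hi j); rewrite ji => /eqP.
- by case: (core_step i0 t01 hne) => t' [_ _ hlt]; move: (leq_trans hlt hc).
- by exists t; split => //; exists i => j ji; move: (hi j); rewrite ji => /eqP.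
- case: (core_step i0 t01 hne) => t' [b s hlt].
  case: (IH t' _ b) => [|t0 [b0 s0 h0]]; first by rewrite -ltnS (leq_trans hlt hc).
  by exists t0; split => //; rewrite s0 s.
Qed.
End Core.
Section Conv.
Variables (R : realFieldType) (n : nat).
Local Notation E := 'rV[R]_n.

Definition cw (T : seq E) (y : E) := exists f : E -> R,
  [/\ (forall z, 0 <= f z), \sum_(z <- T) f z = 1 & y = \sum_(z <- T) f z *: z].

Lemma cw_nil y : ~ cw [::] y.
Proof. by case=> f [_]; rewrite big_nil => /eqP; rewrite eq_sym oner_eq0. Qed.

Lemma sum_sub' (W : nmodType) (r1 r2 : seq E) (G : E -> W) :
  uniq r1 -> uniq r2 -> {subset r1 <= r2} ->
  \sum_(z <- r2) (if z \in r1 then G z else 0) = \sum_(z <- r1) G z.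
Proof. by move=> u1 u2 s12; rewrite -big_mkcond sum_sub. Qed.

Lemma cw_mono T T' y : uniq T -> uniq T' -> {subset T <= T'} -> cw T y -> cw T' y.
Proof.
move=> u u' s [f [f0 f1 fy]]; exists (fun z => if z \in T then f z else 0); split.
- by move=> z; case: ifP.
- by rewrite sum_sub'.
- rewrite fy -(sum_sub' (fun z => f z *: z) u u' s); apply: eq_bigr => z _.
  by case: ifP; rewrite ?scale0r.
Qed.

Lemma cw_mem T z : uniq T -> z \in T -> cw T z.
Proof.
move=> u zT; exists (fun w => (w == z)%:R); split.
- by move=> w; rewrite ler0n.
- rewrite -[RHS](@sum_if_eq _ _ _ _ (fun _ => (1:R)) u zT); apply: eq_bigr => w _; by case: (w == z).
- rewrite -[LHS](@sum_if_eq _ _ _ _ (fun w => w) u zT); apply: eq_bigr => w _.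
  by case: (w == z); rewrite ?scale1r ?scale0r.
Qed.

Lemma cw_one T (f : E -> R) s : s \in T -> (forall z, 0 <= f z) ->
  \sum_(z <- T) f z = 1 -> f s = 1 -> \sum_(z <- T) f z *: z = s.
Proof.
move=> sT f0 f1 fs; move: f1; rewrite (big_rem s) //= fs => e.
have h0 : \sum_(y <- rem s T) f y = 0 by apply: (@addrI _ 1); rewrite e addr0.
have z0 z : z \in rem s T -> f z = 0.
  move=> zr; apply/eqP; rewrite eq_le f0 andbT -h0; exact: le_sum_mem.
rewrite (big_rem s) //= fs scale1r big1_seq ?addr0 // => z /andP[_ zr].
by rewrite z0 // scale0r.
Qed.

Lemma cw_rem T s y : s \in T -> cw (rem s T) s -> cw T y -> cw (rem s T) y.
Proof.
move=> sT [g [g0 g1 gs]] [f [f0 f1 fy]].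
exists (fun z => f z + f s * g z); split.
- by move=> z; rewrite addr_ge0 // mulr_ge0.
- rewrite big_split /= -mulr_sumr g1 mulr1; move: f1; rewrite (big_rem s) //= => <-.
  by rewrite addrC.
- rewrite (eq_bigr (fun z => f z *: z + f s *: (g z *: z))); last first.
    by move=> z _; rewrite scalerDl scalerA.
  by rewrite big_split /= -scaler_sumr -gs {1}fy (big_rem s) //= addrC.
Qed.

Lemma conv1 (t a b : R) : 0 < t < 1 -> a <= 1 -> b <= 1 ->
  (1 - t) * a + t * b = 1 -> a = 1 /\ b = 1.
Proof.
move=> /andP[t0 t1] a1 b1 e; have st : 0 < 1 - t by rewrite subr_gt0.
split; apply/eqP; rewrite eq_le ?a1 ?b1 /= leNgt; apply/negP => lt.
- have : (1 - t) * a + t * b < 1.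
    rewrite -[X in _ < X](subrK t 1); apply: ltr_leD.
      by rewrite -[X in _ < X]mulr1 ltr_pM2l.
    exact: ler_piMr (ltW t0) b1.
  by rewrite e ltxx.
- have : (1 - t) * a + t * b < 1.
    rewrite -[X in _ < X](subrK t 1); apply: ler_ltD.
      exact: ler_piMr (ltW st) a1.
    by rewrite -[X in _ < X]mulr1 ltr_pM2l.
  by rewrite e ltxx.
Qed.

Lemma nonvert (sigma : E -> Prop) T s : uniq T -> s \in T ->
  (forall y, sigma y -> cw T y) -> sigma s -> ~ is_vertex sigma s -> cw (rem s T) s.
Proof.
move=> uT sT hT ss nv; apply: NNPP => hno; apply: nv; split => // a b sa sb t ht hs.
have /andP[t0 t1] := ht.
apply: NNPP => hab; apply: hno.
case: (hT a sa) => f [f0 f1 fa]; case: (hT b sb) => g [g0 g1 gb].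
pose h z := (1 - t) * f z + t * g z.
have st : 0 < 1 - t by rewrite subr_gt0.
have h0 z : 0 <= h z by rewrite addr_ge0 // mulr_ge0 // ltW.
have h1 : \sum_(z <- T) h z = 1.
  by rewrite big_split /= -!mulr_sumr f1 g1 !mulr1 subrK.
have hsv : s = \sum_(z <- T) h z *: z.
  rewrite (eq_bigr (fun z => (1 - t) *: (f z *: z) + t *: (g z *: z))); last first.
    by move=> z _; rewrite /h scalerDl !scalerA.
  by rewrite big_split /= -!scaler_sumr -fa -gb.
have fs1 : f s <= 1 by rewrite -f1; exact: le_sum_mem.
have gs1 : g s <= 1 by rewrite -g1; exact: le_sum_mem.
case: (boolP (h s == 1)) => [/eqP hs1 | hs1].
  have [fs gs] := conv1 ht fs1 gs1 hs1.
  exfalso; apply: hab; by rewrite fa gb (cw_one sT f0 f1 fs) (cw_one sT g0 g1 gs).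
have hsl : h s < 1 by rewrite lt_neqAle hs1 -h1 le_sum_mem.
have c0 : 1 - h s != 0 by rewrite subr_eq0 eq_sym.
have hr1 : \sum_(z <- rem s T) h z = 1 - h s.
  by rewrite -h1 [in RHS](big_rem s) //= addrAC subrr add0r.
have hsv' := hsv; rewrite (big_rem s) //= in hsv'.
have hrv : \sum_(z <- rem s T) h z *: z = (1 - h s) *: s.
  by rewrite scalerBl scale1r [X in _ = X - _]hsv' addrAC subrr add0r.
exists (fun z => h z / (1 - h s)); split.
- by move=> z; rewrite divr_ge0 // ltW // subr_gt0.
- by rewrite -mulr_suml hr1 divff.
- rewrite (eq_bigr (fun z => (1 - h s)^-1 *: (h z *: z))); last first.
    by move=> z _; rewrite scalerA mulrC.
  by rewrite -scaler_sumr hrv scalerA mulVf // scale1r.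
Qed.

Lemma KM (sigma : E -> Prop) (Vs : seq E) : uniq Vs ->
  (forall z, z \in Vs <-> is_vertex sigma z) ->
  forall N T, (size T <= N)%N -> uniq T -> (forall y, sigma y -> cw T y) ->
  (forall z, z \in T -> sigma z) -> forall y, sigma y -> cw Vs y.
Proof.
move=> uV memV; elim=> [|N IH] T hs uT hT hTs y sy;
  case: (classic (forall z, z \in T -> is_vertex sigma z)) => [hall | hnall].
- by apply: (cw_mono uT uV _ (hT y sy)) => z /hall /memV.
- exfalso; apply: hnall => z; move: hs; rewrite leqn0 size_eq0 => /eqP ->.
  by rewrite in_nil.
- by apply: (cw_mono uT uV _ (hT y sy)) => z /hall /memV.
have [z [zT nz]] : exists z, z \in T /\ ~ is_vertex sigma z.
  apply: NNPP => h; apply: hnall => z zT; apply: NNPP => nz; apply: h; by exists z.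
apply: (IH (rem z T)) => //.
- by rewrite size_rem //; case: (size T) hs.
- exact: rem_uniq.
- move=> y' sy'; apply: cw_rem => //; last exact: hT.
  exact: nonvert (hTs z zT) nz.
- by move=> z' /mem_rem; apply: hTs.
Qed.
End Conv.
Section Conv2.
Variables (R : realFieldType) (n : nat).
Local Notation E := 'rV[R]_n.

Lemma mem_conv (S : seq E) s : s \in S -> conv S s.
Proof.
move=> sS; pose i0 : 'I_(size S) := Ordinal (etrans (index_mem s S) sS).
exists (fun i => (i == i0)%:R); split; [|split].
- by move=> i; rewrite ler0n.
- by rewrite (bigD1 i0) //= eqxx big1 ?addr0 // => i /negbTE ->.
- rewrite (bigD1 i0) //= eqxx scale1r big1 ?addr0; first by rewrite nth_index.
  by move=> i /negbTE ->; rewrite scale0r.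
Qed.

Lemma sum_undup (W : nmodType) (S : seq E) (F : 'I_(size S) -> W) :
  \sum_(z <- undup S) \sum_(i : 'I_(size S) | S`_i == z) F i = \sum_i F i.
Proof.
rewrite (eq_bigr (fun z => \sum_(i : 'I_(size S)) (if S`_i == z then F i else 0))); last first.
  by move=> z _; rewrite big_mkcond.
rewrite exchange_big; apply: eq_bigr => i _.
have mi : S`_i \in undup S by rewrite mem_undup mem_nth.
rewrite -[RHS](@sum_if_eq _ _ _ _ (fun _ => F i) (undup_uniq S) mi).
by apply: eq_bigr => z _; rewrite eq_sym.
Qed.

Lemma conv_cw (S : seq E) x : conv S x -> cw (undup S) x.
Proof.
case=> l [l0 [l1 lx]]; exists (fun z => \sum_(i : 'I_(size S) | S`_i == z) l i); split.
- by move=> z; apply: sumr_ge0.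
- by rewrite sum_undup.
- rewrite lx -sum_undup; apply: eq_bigr => z _; rewrite scaler_suml.
  by apply: eq_bigr => i /eqP ->.
Qed.

Lemma vertex_in (sigma : E -> Prop) (S : seq E) v :
  (forall x, sigma x <-> conv S x) -> is_vertex sigma v -> v \in S.
Proof.
move=> hS [sv hext]; case: (proj1 (hS v) sv) => l [l0 [l1 lv]].
have [i /andP[_ li]] : exists i, true && (0 < l i).
  by apply: psumr_neq0P => //; rewrite l1; apply/eqP; exact: oner_neq0.
have rest : \sum_(j | j != i) l j = 1 - l i by rewrite -l1 [in RHS](bigD1 i) //= addrAC subrr add0r.
have lv' : v = l i *: S`_i + \sum_(j | j != i) l j *: S`_j by rewrite lv (bigD1 i).
suff -> : v = S`_i by exact: mem_nth.
case: (boolP (l i == 1)) => [/eqP li1 | li1].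
  move: rest; rewrite li1 subrr => rest0.
  rewrite lv' li1 scale1r big1 ?addr0 // => j ji.
  by rewrite (psumr_eq0P _ rest0 ji) ?scale0r.
have c0 : 0 < 1 - l i.
  rewrite lt_neqAle eq_sym subr_eq0 eq_sym li1 -rest /=; exact: sumr_ge0.
pose r := \sum_(j | j != i) (l j / (1 - l i)) *: S`_j.
have sr : sigma r.
  apply/hS; exists (fun j => if j != i then l j / (1 - l i) else 0); split; [|split].
  - by move=> j; case: ifP => // _; rewrite divr_ge0 // ltW.
  - by rewrite -big_mkcond /= -mulr_suml rest divff // gt_eqF.
  - rewrite /r big_mkcond /=; apply: eq_bigr => j _; by case: ifP; rewrite ?scale0r.
have si : sigma S`_i by apply/hS; apply: mem_conv; exact: mem_nth.
have li01 : 0 < l i < 1 by rewrite li -subr_gt0 c0.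
have hv : v = (1 - l i) *: r + l i *: S`_i.
  rewrite lv' addrC /r scaler_sumr; congr (_ + _); apply: eq_bigr => j _.
  by rewrite scalerA mulrC divfK // gt_eqF.
have ri := hext r S`_i sr si (l i) li01 hv.
by rewrite hv ri scalerBl scale1r subrK.
Qed.
End Conv2.
Theorem mainTheorem15 (R : realFieldType) (n : nat)
  (sigma : 'rV[R]_n -> Prop) (D : seq 'rV[R]_n) :
  is_polytope sigma -> suff_rich D sigma ->
  forall x : 'rV[R]_n, zonotope (fun z => z \in D) x ->
    (exists v, is_vertex sigma v /\
       forall y, zonotope (edge_dirs sigma v) y ->
                 zonotope (fun z => z \in D) (x + y)) /\
    (exists u : 'rV[R]_n, sigma (x - u) /\
       forall y, sigma y -> zonotope (fun z => z \in D) (y + u)).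
Proof.
move=> [S [Sn hS]] rich x [sD [uD [memD [t [t01 xt]]]]].
pose isv z := if excluded_middle_informative (is_vertex sigma z) then true else false.
have isvP z : isv z <-> is_vertex sigma z.
  by rewrite /isv; case: excluded_middle_informative.
pose Vs := [seq z <- undup S | isv z].
have uV : uniq Vs by rewrite filter_uniq // undup_uniq.
have memV z : z \in Vs <-> is_vertex sigma z.
  rewrite mem_filter mem_undup; split; first by case/andP => /isvP.
  by move=> vz; apply/andP; split; [apply/isvP | exact: vertex_in hS vz].
have sigS z : z \in S -> sigma z by move=> zS; apply/hS; exact: mem_conv.
have hKM : forall y, sigma y -> cw Vs y.
  apply: (KM uV memV (leqnn (size (undup S))) (undup_uniq S)).
    by move=> y /hS; exact: conv_cw.
  by move=> z; rewrite mem_undup; exact: sigS.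
have kpos : (0 < size Vs)%N.
  have s0S : head 0 S \in S by case: (S) Sn => // a l _; rewrite in_cons eqxx.
  have := hKM _ (sigS _ s0S); rewrite lt0n size_eq0; apply: contraPN => /eqP ->.
  exact: cw_nil.
pose vt (j : 'I_(size Vs)) := Vs`_j.
have vtV j : is_vertex sigma (vt j) by apply/memV; exact: mem_nth.
have hD : forall i j : 'I_(size Vs), i != j -> vt j - vt i \in sD.
  move=> i j ij; apply/memD; apply: rich; rewrite ?vtV //.
  by rewrite /vt nth_uniq.
have [t0 [b0 s0 [i hi]]] := core uD hD (Ordinal kpos) (leqnn _) t01.
pose v := vt i.
have P1 : forall y, zonotope (edge_dirs sigma v) y -> zonotope (fun z => z \in D) (x + y).
  move=> y [s' [us' [mems' [t1 [t11 yt]]]]].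
  have s'D : {subset s' <= sD}.
    move=> z /mems' [w [wv [wnv ->]]]; apply/memD; apply: rich => //; first exact: vtV.
    by apply/eqP => e; apply: wnv; rewrite -e.
  have t0z : forall z, z \in s' -> t0 z = 0.
    move=> z /mems' [w [wv [wnv ->]]].
    have wV : w \in Vs by apply/memV.
    pose j : 'I_(size Vs) := Ordinal (etrans (index_mem w Vs) wV).
    have wj : w = vt j by rewrite /vt /= nth_index.
    rewrite wj; apply: hi; apply/eqP => ji; apply: wnv.
    by rewrite wj /v ji.
  exists sD; split => //; split => //.
  exists (fun d => t0 d + (if d \in s' then t1 d else 0)); split.
  - move=> d; case: (boolP (d \in s')) => ds; first by rewrite t0z // add0r.
    by rewrite addr0.
  - rewrite (eq_bigr (fun d => t0 d *: d + (if d \in s' then t1 d *: d else 0))); last first.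
      by move=> d _; rewrite scalerDl; case: ifP; rewrite ?scale0r.
    by rewrite big_split /= s0 -xt sum_sub' // -yt.
split; first by exists v; split => //; exact: vtV.
exists (x - v); split.
  by rewrite opprB addrC subrK; exact: (proj1 (vtV i)).
move=> y sy; rewrite addrCA; apply: P1.
case: (hKM y sy) => f [f0 f1 fy].
pose s' := [seq w - v | w <- [seq w <- Vs | w != v]].
exists s'; split.
  by rewrite /s' map_inj_uniq ?filter_uniq ?undup_uniq //; exact: addIr.
split.
  move=> z; split.
    case/mapP => w; rewrite mem_filter => /andP[wnv wV] ->.
    by exists w; split; [apply/memV | split => //; apply/eqP].
  move=> [w [wv [wnv ->]]]; apply: map_f; rewrite mem_filter; apply/andP; split.
    exact/eqP.
  exact/memV.
exists (fun z => if z + v \in Vs then f (z + v) else 0); split.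
  move=> z; case: ifP => zV; last by rewrite lexx ler01.
  by rewrite f0 /= -f1 le_sum_mem.
rewrite big_map big_filter big_mkcond /=.
transitivity (\sum_(w <- Vs) f w *: (w - v)); last first.
  apply: eq_big_seq => w wV; rewrite subrK wV.
  by case: (w =P v) => [->|_] /=; rewrite ?subrr ?scaler0.
rewrite (eq_bigr (fun w => f w *: w - f w *: v)); last by move=> w _; rewrite scalerBr.
by rewrite sumrB -scaler_suml f1 scale1r -fy.
Qed.
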